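(* Consider the SDP pair and one-step ADMM of the context (with $\mathcal A$ surjective and nonempty KKT set). For every $k\in\mathbb N$, $$\|Z^{(k+1)}-Z^{(k)}\|_F^2=\|\mathcal P(X^{(k)}-\widetilde X)\|_F^2+\sigma^2\|\mathcal P^\perp(S^{(k)}-C)\|_F^2,$$ where $\widetilde X\in\mathbb S^n$ is an arbitrary matrix with $\mathcal A\widetilde X=b$, and $$\|Z^{(k+1)}-Z^{(k)}\|_F^2\le\operatorname{dist}^2(Z^{(k)},\mathcal Z_\star)-\operatorname{dist}^2(Z^{(k+1)},\mathcal Z_\star).$$
   Context: $\mathbb S^n$: real symmetric matrices, trace inner product, Frobenius norm; $\Pi_{\mathbb S^n_+}$ projection onto the PSD cone; $\operatorname{dist}(Z,\mathcal S)=\inf_{W\in\mathcal S}\|Z-W\|_F$. SDP pair: min $\langle C,X\rangle$ s.t. $\mathcal AX=b$, $X\succeq0$ / max $b^\top y$ s.t. $\mathcal A^*y+S=C$, $S\succeq0$, with $C,A_i\in\mathbb S^n$, $\mathcal AX=(\langle A_i,X\rangle)_i$ surjective, $\mathcal A^*y=\sum y_iA_i$, KKT set nonempty. $\mathcal P=\mathcal A^*(\mathcal A\mathcal A^* )^{-1}\mathcal A$, $\mathcal P^\perp=\mathrm{Id}-\mathcal P$. For $\sigma>0$ and $Z^{(0)}\in\mathbb S^n$: $Z^{(k+1)}=\mathcal P(-2\Pi_{\mathbb S^n_+}(Z^{(k)})+Z^{(k)})+\Pi_{\mathbb S^n_+}(Z^{(k)})+\mathcal A^*(\mathcal A\mathcal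 A^* )^{-1}b+\sigma\mathcal PC-\sigma C$, $X^{(k)}=\Pi_{\mathbb S^n_+}(Z^{(k)})$, $S^{(k)}=\sigma^{-1}\Pi_{\mathbb S^n_+}(-Z^{(k)})$. $\mathcal Z_\star$ is the set of fixed points of this iteration map. *)

(* Defs.v *)
From HB Require Import structures.
From mathcomp Require Import all_boot all_order all_algebra.
From mathcomp Require Import boolp classical_sets reals.
Set Implicit Arguments. Unset Strict Implicit. Unset Printing Implicit Defensive.
Import Order.TTheory GRing.Theory Num.Theory.
Local Open Scope ring_scope.
Local Open Scope classical_set_scope.

Section SDP.
Variables (R : realType) (n m : nat).

Definition symmx (X : 'M[R]_n) : Prop := X^T = X.

Definition fdot (A B : 'M[R]_n) : R := \tr (A^T *m B).
Definition fnorm2 (A : 'M[R]_n) : R := fdot A A.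
Definition fnorm (A : 'M[R]_n) : R := Num.sqrt (fnorm2 A).

Definition psd (X : 'M[R]_n) : Prop :=
  symmx X /\ forall v : 'cV[R]_n, 0 <= (v^T *m X *m v) 0 0.

Definition is_projPSD (Z W : 'M[R]_n) : Prop :=
  psd W /\ forall V, psd V -> fnorm (Z - W) <= fnorm (Z - V).

Definition projPSD (Z : 'M[R]_n) : 'M[R]_n :=
  match pselect (exists W, is_projPSD Z W) with
  | left h => projT1 (cid h)
  | right _ => 0
  end.

Variable (A : 'I_m -> 'M[R]_n).

Definition Aop (X : 'M[R]_n) : 'cV[R]_m := \col_i fdot (A i) X.
Definition Aadj (y : 'cV[R]_m) : 'M[R]_n := \sum_i y i ord0 *: A i.
(* A Aadj as an m x m matrix *)
Definition AAadj : 'M[R]_m := \matrix_(i, j) fdot (A i) (A j).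

Definition Pproj (Z : 'M[R]_n) : 'M[R]_n := Aadj (invmx AAadj *m Aop Z).
Definition Pperp (Z : 'M[R]_n) : 'M[R]_n := Z - Pproj Z.

Variables (b : 'cV[R]_m) (C : 'M[R]_n).

Definition A_surjective : Prop :=
  forall y : 'cV[R]_m, exists X, symmx X /\ Aop X = y.

Definition KKT_nonempty : Prop :=
  exists (X : 'M[R]_n) (y : 'cV[R]_m) (S : 'M[R]_n),
    Aop X = b /\ psd X /\ Aadj y + S = C /\ psd S /\ fdot X S = 0.

Variable (sigma : R).

Definition admm_step (Z : 'M[R]_n) : 'M[R]_n :=
  Pproj (- 2 *: projPSD Z + Z) + projPSD Z + Aadj (invmx AAadj *m b)
  + sigma *: Pproj C - sigma *: C.

Definition Zseq (Z0 : 'M[R]_n) (k : nat) : 'M[R]_n := iter k admm_step Z0.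
Definition Xseq (Z0 : 'M[R]_n) (k : nat) : 'M[R]_n := projPSD (Zseq Z0 k).
Definition Sseq (Z0 : 'M[R]_n) (k : nat) : 'M[R]_n :=
  sigma^-1 *: projPSD (- Zseq Z0 k).

Definition Zstar : set 'M[R]_n := [set Z | symmx Z /\ admm_step Z = Z].

Definition dist (Z : 'M[R]_n) (S : set 'M[R]_n) : R :=
  inf [set fnorm (Z - W) | W in S].

End SDP.

(* Main.v *)
Require Import Defs.
From HB Require Import structures.
From mathcomp Require Import all_boot all_order all_algebra.
From mathcomp Require Import boolp classical_sets reals.
From mathcomp Require Import complex spectral sesquilinear.
From mathcomp Require Import lra.
Set Implicit Arguments. Unset Strict Implicit.
Import Order.TTheory GRing.Theory Num.Theory.
Local Open Scope ring_scope.


Section Frame.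
Variable R : realType.
Local Notation C := (R[i]).
Definition emb p q (M : 'M[R]_(p, q)) : 'M[C]_(p, q) := map_mx (real_complex R) M.

Lemma emb_real p q (M : 'M[R]_(p, q)) : emb M \is a mxOver Num.real.
Proof. by apply/mxOverP => i j; rewrite mxE; apply/complex_realP; exists (M i j). Qed.

Lemma ceq p q (A B A' B' : 'M[R]_(p, q)) :
  emb A + 'i *: emb B = emb A' + 'i *: emb B' -> A = A' /\ B = B'.
Proof.
move=> /eqmx_ReiIm; rewrite !emb_real => /(_ isT isT isT isT) [] /map_mx_inj -> /map_mx_inj -> //.
Qed.

Lemma cdecomp p q (M : 'M[C]_(p, q)) :
  M = emb (map_mx (@complex.Re R) M) + 'i *: emb (map_mx (@complex.Im R) M).
Proof.
apply/matrixP => i j; rewrite !mxE.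
by rewrite [LHS]complexE.
Qed.

Lemma cprod p q r (A B : 'M[R]_(p, q)) (A' B' : 'M[R]_(q, r)) :
  (emb A + 'i *: emb B) *m (emb A' + 'i *: emb B') =
  emb (A *m A' - B *m B') + 'i *: emb (A *m B' + B *m A').
Proof.
rewrite /emb !map_mxD !map_mxN !map_mxM mulmxDl !mulmxDr -!scalemxAl -!scalemxAr.
rewrite scalerA -expr2 sqr_i scaleN1r scalerDr.
by rewrite [RHS]addrAC !addrA.
Qed.

Lemma cadj p q (A B : 'M[R]_(p, q)) :
  ((emb A + 'i *: emb B) ^t* )%sesqui = emb A^T + 'i *: emb (- B^T).
Proof.
apply/matrixP => i j; rewrite !mxE /=.
change (conjc ((A j i)%:C%C + 'i%C * (B j i)%:C%C) = (A j i)%:C%C + 'i%C * (- B j i)%:C%C).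
by simpc.
Qed.


Lemma frame n (Z : 'M[R]_n) : Z^T = Z ->
  exists P Q : 'M[R]_n, exists d : 'rV[R]_n,
  [/\ P *m P^T + Q *m Q^T = 1%:M, P^T *m P + Q^T *m Q = 1%:M,
      Z *m P = P *m diag_mx d & Z *m Q = Q *m diag_mx d].
Proof.
move=> Zsym.
pose Zc := emb Z.
have Zh : Zc \is hermsymmx.
  apply: realsym_hermsym; last exact: emb_real.
  apply/is_hermitianmxP; rewrite expr0 scale1r map_mx_id // /Zc /emb map_trmx Zsym //.
have /orthomx_spectralP HZ := hermitian_normalmx Zh.
have Sreal := hermitian_spectral_diag_real Zh.
set S := spectralmx Zc in HZ; set sp := spectral_diag Zc in HZ Sreal.
have Su : S \is unitarymx := spectral_unitarymx _.
have SM : S *m (S ^t* )%sesqui = 1%:M by apply/unitarymxP.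
have MS : (S ^t* )%sesqui *m S = 1%:M by rewrite -invmx_unitary // mulVmx // spectral_unit.
set M := (S ^t* )%sesqui in SM MS.
have ZM : Zc *m M = M *m diag_mx sp.
  by rewrite HZ invmx_unitary // -/M -!mulmxA SM mulmx1.
pose P := map_mx (@complex.Re R) M; pose Q := map_mx (@complex.Im R) M.
have EM : M = emb P + 'i *: emb Q := cdecomp M.
have Ed : diag_mx sp = emb (diag_mx (map_mx (@complex.Re R) sp)) + 'i *: emb 0.
  apply/matrixP => i j; rewrite !mxE mulr0 addr0.
  have /complex_realP [k ->] : sp 0 i \is Num.real by move/mxOverP: Sreal; apply.
  by case: eqP => _; rewrite ?mulr1n ?mulr0n.
have EZ : Zc = emb Z + 'i *: emb 0 by rewrite /emb map_mx0 scaler0 addr0.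
have MtS : (M ^t* )%sesqui = S by rewrite /M trmxCK.
exists P, Q, (map_mx (@complex.Re R) sp).
move: ZM; rewrite EZ EM Ed !cprod => /ceq [].
rewrite !mul0mx !mulmx0 subr0 add0r addr0 => -> ->.
move: SM MS; rewrite -MtS EM cadj !cprod.
have -> : (1%:M : 'M[C]_n) = emb 1%:M + 'i *: emb 0 by rewrite /emb map_mx1 map_mx0 scaler0 addr0.
move=> /ceq [+ _] /ceq [+ _]; rewrite !mulNmx !opprK => H1 H2.
by move: H2; rewrite mulmxN opprK subr0 => H2; split.
Qed.
End Frame.


Section Basic.
Variables (R : realType) (n : nat).
Implicit Types (A B D : 'M[R]_n).

Lemma fdotC A B : fdot A B = fdot B A.
Proof. by rewrite /fdot -mxtrace_tr trmx_mul trmxK. Qed.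

Lemma fdotDl A B D : fdot (A + B) D = fdot A D + fdot B D.
Proof. by rewrite /fdot linearD /= mulmxDl mxtraceD. Qed.

Lemma fdotDr A B D : fdot D (A + B) = fdot D A + fdot D B.
Proof. by rewrite /fdot mulmxDr mxtraceD. Qed.

Lemma fdotZl c A B : fdot (c *: A) B = c * fdot A B.
Proof. by rewrite /fdot linearZ /= -scalemxAl mxtraceZ. Qed.

Lemma fdotZr c A B : fdot A (c *: B) = c * fdot A B.
Proof. by rewrite /fdot -scalemxAr mxtraceZ. Qed.

Lemma fdotNl A B : fdot (- A) B = - fdot A B.
Proof. by rewrite -scaleN1r fdotZl mulN1r. Qed.

Lemma fdotNr A B : fdot A (- B) = - fdot A B.
Proof. by rewrite -scaleN1r fdotZr mulN1r. Qed.

Lemma fdotBl A B D : fdot (A - B) D = fdot A D - fdot B D.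
Proof. by rewrite fdotDl fdotNl. Qed.

Lemma fdotBr A B D : fdot D (A - B) = fdot D A - fdot D B.
Proof. by rewrite fdotDr fdotNr. Qed.

Lemma fdot0l A : fdot 0 A = 0.
Proof. by rewrite /fdot trmx0 mul0mx mxtrace0. Qed.

Lemma fdot0r A : fdot A 0 = 0.
Proof. by rewrite fdotC fdot0l. Qed.

Lemma fdot_suml (I : finType) (F : I -> 'M[R]_n) B :
  fdot (\sum_i F i) B = \sum_i fdot (F i) B.
Proof.
apply: (big_ind2 (fun X y => fdot X B = y)); first exact: fdot0l.
  by move=> X1 y1 X2 y2 <- <-; rewrite fdotDl.
by [].
Qed.

Lemma fdotE A B : fdot A B = \sum_i \sum_j A j i * B j i.
Proof.
rewrite /fdot /mxtrace; apply: eq_bigr => i _; rewrite mxE.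
by apply: eq_bigr => j _; rewrite mxE.
Qed.

Lemma fnorm2_ge0 A : 0 <= fnorm2 A.
Proof.
rewrite /fnorm2 fdotE; apply: sumr_ge0 => i _; apply: sumr_ge0 => j _.
by rewrite -expr2 sqr_ge0.
Qed.

Lemma fnorm2_eq0 A : fnorm2 A = 0 -> A = 0.
Proof.
rewrite /fnorm2 fdotE => /eqP; rewrite psumr_eq0; last first.
  by move=> i _; apply: sumr_ge0 => j _; rewrite -expr2 sqr_ge0.
move=> /allP H; apply/matrixP => j i; rewrite mxE.
have /implyP := H i (mem_index_enum _); move=> /(_ isT).
rewrite psumr_eq0; last by move=> k _; rewrite -expr2 sqr_ge0.
move=> /allP /(_ j (mem_index_enum _)) /implyP /(_ isT).
by rewrite mulf_eq0 orbb => /eqP.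
Qed.

Lemma fnorm2D A B : fnorm2 (A + B) = fnorm2 A + fnorm2 B + 2 * fdot A B.
Proof.
rewrite /fnorm2 fdotDl !fdotDr (fdotC B A); lra.
Qed.

Lemma fnorm2B A B : fnorm2 (A - B) = fnorm2 A + fnorm2 B - 2 * fdot A B.
Proof.
rewrite /fnorm2 fdotBl !fdotBr (fdotC B A); lra.
Qed.

Lemma fnorm2N A : fnorm2 (- A) = fnorm2 A.
Proof. by rewrite /fnorm2 fdotNl fdotNr opprK. Qed.

Lemma fnorm2Z c A : fnorm2 (c *: A) = c ^+ 2 * fnorm2 A.
Proof. by rewrite /fnorm2 fdotZl fdotZr mulrA expr2. Qed.

End Basic.


Section Spec.
Variables (R : realType) (n : nat).
Implicit Types (A B D : 'M[R]_n).

Lemma quad_diag (a : 'rV[R]_n) (w : 'cV[R]_n) :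
  (w^T *m diag_mx a *m w) 0 0 = \sum_j a 0 j * w j 0 ^+ 2.
Proof.
rewrite mul_mx_diag mxE; apply: eq_bigr => j _; rewrite !mxE; lra.
Qed.

Lemma entry_quad (M : 'M[R]_n) j :
  M j j = ((delta_mx j 0 : 'cV[R]_n)^T *m M *m (delta_mx j 0 : 'cV[R]_n)) 0 0.
Proof. by rewrite trmx_delta -rowE -colE !mxE. Qed.

Variables (Z P Q : 'M[R]_n) (d : 'rV[R]_n).
Hypotheses (Zsym : Z^T = Z) (HPP : P *m P^T + Q *m Q^T = 1%:M)
  (HPP' : P^T *m P + Q^T *m Q = 1%:M)
  (HZP : Z *m P = P *m diag_mx d) (HZQ : Z *m Q = Q *m diag_mx d).

Definition Gm (a : 'rV[R]_n) := P *m diag_mx a *m P^T + Q *m diag_mx a *m Q^T.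

Lemma GmZ : Gm d = Z.
Proof.
by rewrite /Gm -HZP -HZQ -!mulmxA -mulmxDr HPP mulmx1.
Qed.

Lemma GmB (a b : 'rV[R]_n) : Gm a - Gm b = Gm (a - b).
Proof.
rewrite /Gm linearB /= !mulmxBr !mulmxBl.
by rewrite opprD !addrA; congr (_ + _); rewrite addrAC.
Qed.

Lemma Gm_sym (a : 'rV[R]_n) : (Gm a)^T = Gm a.
Proof. by rewrite /Gm linearD /= !trmx_mul !trmxK tr_diag_mx !mulmxA. Qed.

Lemma Gm_quad (a : 'rV[R]_n) (v : 'cV[R]_n) : (forall j, 0 <= a 0 j) ->
  0 <= (v^T *m Gm a *m v) 0 0.
Proof.
move=> a0; rewrite /Gm mulmxDr mulmxDl mxE.
have H X : 0 <= (v^T *m (X *m diag_mx a *m X^T) *m v) 0 0.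
  rewrite !mulmxA -[v^T *m X]trmxK trmx_mul trmxK -mulmxA quad_diag.
  by apply: sumr_ge0 => j _; apply: mulr_ge0 => //; rewrite sqr_ge0.
by apply: addr_ge0; apply: H.
Qed.

Lemma ortho (X Y : 'M[R]_n) : (X = P \/ X = Q) -> (Y = P \/ Y = Q) ->
  (X^T *m Y) *m diag_mx d = diag_mx d *m (X^T *m Y).
Proof.
have E : forall W, W = P \/ W = Q -> Z *m W = W *m diag_mx d.
  by move=> W [->|->].
move=> HX HY.
rewrite -mulmxA -E // mulmxA -[X^T *m Z]trmxK trmx_mul trmxK Zsym E //.
by rewrite trmx_mul tr_diag_mx mulmxA.
Qed.

Lemma ortho_entry (X Y : 'M[R]_n) j k : (X = P \/ X = Q) -> (Y = P \/ Y = Q) ->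
  d 0 j != d 0 k -> (X^T *m Y) j k = 0.
Proof.
move=> HX HY djk; have /matrixP /(_ j k) := ortho HX HY.
rewrite mul_mx_diag mul_diag_mx !mxE => /eqP.
rewrite [X in X == _]mulrC -subr_eq0 -mulrBl mulf_eq0 => /orP [|/eqP //].
by rewrite subr_eq0 eq_sym (negPf djk).
Qed.

Lemma Gm_mul (f g : R -> R) : (forall x, f x * g x = 0) ->
  Gm (map_mx f d) *m Gm (map_mx g d) = 0.
Proof.
move=> fg.
have mid X Y : (X = P \/ X = Q) -> (Y = P \/ Y = Q) ->
    diag_mx (map_mx f d) *m (X^T *m Y) *m diag_mx (map_mx g d) = 0.
  move=> HX HY; apply/matrixP => j k.
  rewrite mul_mx_diag mul_diag_mx !mxE.
  have [e|ne] := eqVneq (d 0 j) (d 0 k).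
    by rewrite mulrC mulrA -e [g _ * _]mulrC fg mul0r.
  by move: (ortho_entry HX HY ne); rewrite mxE => ->; rewrite mulr0 mul0r.
have E X Y : (X = P \/ X = Q) -> (Y = P \/ Y = Q) ->
    (X *m diag_mx (map_mx f d) *m X^T) *m (Y *m diag_mx (map_mx g d) *m Y^T) = 0.
  move=> HX HY.
  have -> : (X *m diag_mx (map_mx f d) *m X^T) *m (Y *m diag_mx (map_mx g d) *m Y^T)
     = X *m (diag_mx (map_mx f d) *m (X^T *m Y) *m diag_mx (map_mx g d)) *m Y^T.
    by rewrite !mulmxA.
  by rewrite mid // mulmx0 mul0mx.
rewrite /Gm mulmxDl !mulmxDr !E; try by [left|right].
by rewrite !addr0.
Qed.

End Spec.


Section Proj.
Variables (R : realType) (n : nat).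
Implicit Types (A B D W N V Z : 'M[R]_n).

Lemma psdD A B : psd A -> psd B -> psd (A + B).
Proof.
move=> [sA qA] [sB qB]; split; first by rewrite /symmx linearD /= sA sB.
by move=> v; rewrite mulmxDr mulmxDl mxE addr_ge0.
Qed.

Lemma psdZ c A : 0 <= c -> psd A -> psd (c *: A).
Proof.
move=> c0 [sA qA]; split; first by rewrite /symmx linearZ /= sA.
by move=> v; rewrite -scalemxAr -scalemxAl mxE mulr_ge0.
Qed.

Lemma psd_dot N V : psd N -> psd V -> 0 <= fdot N V.
Proof.
move=> [sN qN] [sV qV].
have [P [Q [d [HPP HPP' HZP HZQ]]]] := frame sV.
have key X : (X = P \/ X = Q) -> forall j, 0 <= (X^T *m N *m X) j j.
  move=> _ j; rewrite entry_quad trmx_delta.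
  set e := delta_mx j 0 : 'cV[R]_n.
  rewrite -trmx_delta -/e.
  have -> : e^T *m (X^T *m N *m X) *m e = (X *m e)^T *m N *m (X *m e) by rewrite trmx_mul !mulmxA.
  exact: qN.
have keyV X : (X = P \/ X = Q) -> forall j, 0 <= (X^T *m V *m X) j j.
  move=> _ j; rewrite entry_quad trmx_delta.
  set e := delta_mx j 0 : 'cV[R]_n.
  rewrite -trmx_delta -/e.
  have -> : e^T *m (X^T *m V *m X) *m e = (X *m e)^T *m V *m (X *m e) by rewrite trmx_mul !mulmxA.
  exact: qV.
have dpos j : 0 <= d 0 j.
  have -> : d 0 j = (P^T *m V *m P + Q^T *m V *m Q) j j.
    rewrite -!mulmxA HZP HZQ !mulmxA -mulmxDl HPP' mul1mx mxE eqxx mulr1n //.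
  by rewrite mxE; apply: addr_ge0; [apply: (keyV P); left | apply: (keyV Q); right].
rewrite /fdot sN -(GmZ HPP HZP HZQ) /Gm mulmxDr mxtraceD.
have T X : (X = P \/ X = Q) -> 0 <= \tr (N *m (X *m diag_mx d *m X^T)).
  move=> HX; rewrite mulmxA mxtrace_mulC !mulmxA mul_mx_diag /mxtrace.
  apply: sumr_ge0 => j _; rewrite mxE mulr_ge0 //.
  exact: key HX j.
by apply: addr_ge0; [apply: (T P); left | apply: (T Q); right].
Qed.

Lemma maxpn (x : R) : Num.max x 0 - Num.max (- x) 0 = x.
Proof. by rewrite !maxEle; case: leP => h1; case: leP => h2; lra. Qed.

Lemma maxpn0 (x : R) : Num.max x 0 * Num.max (- x) 0 = 0.
Proof.
rewrite !maxEle; case: leP => h1; case: leP => h2; rewrite ?mulr0 ?mul0r //.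
lra.
Qed.

Lemma moreau_ex Z : Z^T = Z ->
  exists W N, [/\ psd W, psd N, Z = W - N & fdot W N = 0].
Proof.
move=> sZ; have [P [Q [d [HPP HPP' HZP HZQ]]]] := frame sZ.
pose W := Gm P Q (map_mx (fun x => Num.max x 0) d).
pose N := Gm P Q (map_mx (fun x => Num.max (- x) 0) d).
exists W, N; split.
- split; first exact: Gm_sym.
  by move=> v; apply: Gm_quad => j; rewrite mxE le_max lexx orbT.
- split; first exact: Gm_sym.
  by move=> v; apply: Gm_quad => j; rewrite mxE le_max lexx orbT.
- rewrite /W /N GmB -{1}(GmZ HPP HZP HZQ); congr Gm.
  by apply/matrixP => i j; rewrite !mxE maxpn.
- rewrite /fdot Gm_sym (Gm_mul sZ HZP HZQ) ?mxtrace0 //.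
  exact: maxpn0.
Qed.

Lemma char_proj Z W N : psd W -> psd N -> Z = W - N -> fdot W N = 0 ->
  is_projPSD Z W.
Proof.
move=> pW pN -> WN; split => // V pV.
rewrite /fnorm ler_sqrt ?fnorm2_ge0 //.
have -> : W - N - W = - N by rewrite addrAC subrr add0r.
have -> : W - N - V = (W - V) - N by rewrite addrAC.
rewrite fnorm2N fnorm2B fdotBl WN.
have := psd_dot pV pN; rewrite fdotC.
have := fnorm2_ge0 (W - V); lra.
Qed.

Lemma proj_unique Z W1 W2 : is_projPSD Z W1 -> is_projPSD Z W2 -> W1 = W2.
Proof.
move=> [p1 h1] [p2 h2].
have e12 := h1 _ p2; have e21 := h2 _ p1.
move: e12 e21; rewrite /fnorm !ler_sqrt ?fnorm2_ge0 // => e12 e21.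
have pm : psd (2^-1 *: (W1 + W2)) by apply: psdZ; [rewrite invr_ge0 ler0n | exact: psdD].
have := h1 _ pm; rewrite /fnorm ler_sqrt ?fnorm2_ge0 //.
have -> : Z - 2^-1 *: (W1 + W2) = 2^-1 *: ((Z - W1) + (Z - W2)).
  apply/matrixP => i j; rewrite !mxE; lra.
rewrite fnorm2Z (fnorm2D (Z - W1) (Z - W2)) => H.
have : fnorm2 (W1 - W2) <= 0.
  have -> : W1 - W2 = (Z - W2) - (Z - W1) by apply/matrixP => i j; rewrite !mxE; lra.
  rewrite (fnorm2B (Z - W2) (Z - W1)) (fdotC (Z - W2)).
  move: H; set a := fnorm2 (Z - W1); set b := fnorm2 (Z - W2); set c := fdot (Z - W1) (Z - W2).
  rewrite expr2 => H.
  lra.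
move=> H2; apply/eqP; rewrite -subr_eq0; apply/eqP/fnorm2_eq0.
by apply/le_anti; rewrite H2 fnorm2_ge0.
Qed.

End Proj.


Section PSDproj.
Variables (R : realType) (n : nat).
Implicit Types (W N Z : 'M[R]_n).

Lemma projPSD_eq Z W N : psd W -> psd N -> Z = W - N -> fdot W N = 0 ->
  projPSD Z = W.
Proof.
move=> pW pN EZ WN; have hp := char_proj pW pN EZ WN.
rewrite /projPSD; case: pselect => [h|h]; last by exfalso; apply: h; exists W.
by case: cid => /= W' HW'; apply: proj_unique HW' hp.
Qed.

Lemma moreau Z : Z^T = Z ->
  [/\ psd (projPSD Z), psd (projPSD (- Z)), Z = projPSD Z - projPSD (- Z)
    & fdot (projPSD Z) (projPSD (- Z)) = 0].
Proof.
move=> sZ; have [W [N [pW pN EZ WN]]] := moreau_ex sZ.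
have -> : projPSD Z = W by exact: projPSD_eq EZ WN.
have -> : projPSD (- Z) = N.
  apply: projPSD_eq pN pW _ _; last by rewrite fdotC.
  by rewrite EZ opprB.
by split.
Qed.

End PSDproj.

Section Op.
Variables (R : realType) (n m : nat) (A : 'I_m -> 'M[R]_n).
Hypothesis Asym : forall i, symmx (A i).
Hypothesis Asurj : A_surjective A.
Local Notation G := (AAadj A).
Implicit Types (X Y : 'M[R]_n) (y z : 'cV[R]_m).

Lemma AopE X i : Aop A X i 0 = fdot (A i) X.
Proof. by rewrite mxE. Qed.

Lemma AopD X Y : Aop A (X + Y) = Aop A X + Aop A Y.
Proof. by apply/matrixP => i j; rewrite !mxE fdotDr. Qed.

Lemma AopZ c X : Aop A (c *: X) = c *: Aop A X.
Proof. by apply/matrixP => i j; rewrite !mxE fdotZr. Qed.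

Lemma AopN X : Aop A (- X) = - Aop A X.
Proof. by rewrite -scaleN1r AopZ scaleN1r. Qed.

Lemma AadjD y z : Aadj A (y + z) = Aadj A y + Aadj A z.
Proof.
by rewrite /Aadj -big_split /=; apply: eq_bigr => i _; rewrite mxE scalerDl.
Qed.

Lemma AadjZ c y : Aadj A (c *: y) = c *: Aadj A y.
Proof.
rewrite /Aadj scaler_sumr; apply: eq_bigr => i _; by rewrite mxE scalerA.
Qed.

Lemma AadjN y : Aadj A (- y) = - Aadj A y.
Proof. by rewrite -scaleN1r AadjZ scaleN1r. Qed.

Lemma Aadj_sym y : (Aadj A y)^T = Aadj A y.
Proof.
rewrite /Aadj linear_sum /=; apply: eq_bigr => i _.
by rewrite linearZ /= Asym.
Qed.

Lemma Aadj_fdot y X : fdot (Aadj A y) X = \sum_i y i 0 * fdot (A i) X.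
Proof. by rewrite /Aadj fdot_suml; apply: eq_bigr => i _; rewrite fdotZl. Qed.

Lemma Aop_Aadj y : Aop A (Aadj A y) = G *m y.
Proof.
apply/matrixP => i j; rewrite !mxE fdotC Aadj_fdot.
rewrite (ord1 j); apply: eq_bigr => k _; rewrite !mxE fdotC mulrC //.
Qed.

Lemma G_sym : G^T = G.
Proof. by apply/matrixP => i j; rewrite !mxE fdotC. Qed.

Lemma G_inj (u : 'rV[R]_m) : u *m G = 0 -> u = 0.
Proof.
move=> uG; pose yv := u^T.
have Gy : G *m yv = 0 by rewrite /yv -G_sym -trmx_mul uG trmx0.
have : fnorm2 (Aadj A yv) = 0.
  rewrite /fnorm2 Aadj_fdot big1 // => i _.
  rewrite -AopE Aop_Aadj Gy. by rewrite !mxE mulr0.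
move=> /fnorm2_eq0 Ay0.
have [X [_ AX]] := Asurj yv.
have : fdot (Aadj A yv) X = 0 by rewrite Ay0 fdot0l.
rewrite Aadj_fdot => /eqP; rewrite psumr_eq0; last first.
  by move=> i _; rewrite -AopE AX -expr2 sqr_ge0.
move=> /allP H; apply/matrixP => i j; rewrite (ord1 i) mxE.
have := H j (mem_index_enum _); rewrite -AopE AX /yv mxE -expr2 => /implyP /(_ isT).
by rewrite sqrf_eq0 => /eqP.
Qed.

Lemma G_unit : G \in unitmx.
Proof.
rewrite -row_free_unit -kermx_eq0; apply/eqP/row_matrixP => i.
rewrite row0; apply: G_inj.
by rewrite -row_mul mulmx_ker row0.
Qed.

Lemma PprojD X Y : Pproj A (X + Y) = Pproj A X + Pproj A Y.
Proof. by rewrite /Pproj AopD mulmxDr AadjD. Qed.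

Lemma PprojZ c X : Pproj A (c *: X) = c *: Pproj A X.
Proof. by rewrite /Pproj AopZ -scalemxAr AadjZ. Qed.

Lemma PprojN X : Pproj A (- X) = - Pproj A X.
Proof. by rewrite -scaleN1r PprojZ scaleN1r. Qed.

Lemma PprojB X Y : Pproj A (X - Y) = Pproj A X - Pproj A Y.
Proof. by rewrite PprojD PprojN. Qed.

Lemma Aop_Pproj X : Aop A (Pproj A X) = Aop A X.
Proof. by rewrite /Pproj Aop_Aadj mulmxA mulmxV ?G_unit // mul1mx. Qed.

Lemma Aop_Pperp X : Aop A (Pperp A X) = 0.
Proof. by rewrite /Pperp AopD AopN Aop_Pproj subrr. Qed.

Lemma Pproj_Aadj y : Pproj A (Aadj A y) = Aadj A y.
Proof. by rewrite /Pproj Aop_Aadj mulKmx // G_unit. Qed.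

Lemma fdot_PP X Y : fdot (Pproj A X) (Pperp A Y) = 0.
Proof.
rewrite /Pproj Aadj_fdot big1 // => i _.
by rewrite -AopE Aop_Pperp !mxE mulr0.
Qed.

Lemma Pproj_sym X : (Pproj A X)^T = Pproj A X.
Proof. exact: Aadj_sym. Qed.

Lemma pyth1 X Y : fnorm2 (Pproj A X - Pperp A Y) = fnorm2 (Pproj A X) + fnorm2 (Pperp A Y).
Proof. by rewrite fnorm2B fdot_PP mulr0 subr0. Qed.

Lemma pyth2 X Y : fnorm2 (Pperp A X - Pproj A Y) = fnorm2 (Pperp A X) + fnorm2 (Pproj A Y).
Proof. by rewrite fnorm2B fdotC fdot_PP mulr0 subr0 addrC. Qed.

Lemma pyth3 X Y : fnorm2 (Pproj A X + Pperp A Y) = fnorm2 (Pproj A X) + fnorm2 (Pperp A Y).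
Proof. by rewrite fnorm2D fdot_PP mulr0 addr0. Qed.

Lemma pyth X : fnorm2 X = fnorm2 (Pproj A X) + fnorm2 (Pperp A X).
Proof. by rewrite -pyth3 /Pperp addrC subrK. Qed.

End Op.


Section Main.
Variables (R : realType) (n m : nat) (A : 'I_m -> 'M[R]_n).
Variables (b : 'cV[R]_m) (C : 'M[R]_n) (sigma : R).
Hypothesis Asym : forall i, symmx (A i).
Hypothesis Csym : symmx C.
Hypothesis Asurj : A_surjective A.
Hypothesis sig0 : 0 < sigma.
Local Notation T := (admm_step A b C sigma).
Local Notation x0 := (Aadj A (invmx (AAadj A) *m b)).
Local Notation c0 := (x0 + sigma *: Pproj A C - sigma *: C).
Implicit Types (X Y Z : 'M[R]_n).

Lemma step_eq Z : Z^T = Z ->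
  T Z = Pperp A (projPSD Z) - Pproj A (projPSD (- Z)) + c0.
Proof.
move=> sZ; have [_ _ EZ _] := moreau sZ.
rewrite /admm_step.
move: EZ; move: (projPSD Z) (projPSD (- Z)) => X S ->.
have -> : -2 *: X + (X - S) = - X - S by apply/matrixP => i j; rewrite !mxE; lra.
rewrite PprojB PprojN /Pperp.
move: (Pproj A X) (Pproj A S) (sigma *: Pproj A C) (sigma *: C) x0 => a1 a2 a3 a4 a5.
apply/matrixP => i j; rewrite !mxE; lra.
Qed.

Lemma symD X Y : X^T = X -> Y^T = Y -> (X + Y)^T = X + Y.
Proof. by move=> hX hY; rewrite raddfD /= hX hY. Qed.

Lemma symN X : X^T = X -> (- X)^T = - X.
Proof. by move=> hX; rewrite raddfN /= hX. Qed.

Lemma symZ c X : X^T = X -> (c *: X)^T = c *: X.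
Proof. by move=> hX; rewrite linearZ /= hX. Qed.

Lemma T_sym Z : Z^T = Z -> (T Z)^T = T Z.
Proof.
move=> sZ; have [[sX _] _ _ _] := moreau sZ.
have sP Y : (Pproj A Y)^T = Pproj A Y by apply: Pproj_sym.
rewrite step_eq // /Pperp.
apply: symD; first apply: symD.
- by apply: symD => //; apply: symN.
- exact: symN.
apply: symD; last by apply: symN; apply: symZ.
by apply: symD; [apply: Aadj_sym | apply: symZ].
Qed.

Lemma Zseq_sym Z0 k : Z0^T = Z0 -> (Zseq A b C sigma Z0 k)^T = Zseq A b C sigma Z0 k.
Proof. by move=> s0; rewrite /Zseq; elim: k => //= k IH; apply: T_sym. Qed.

Lemma part1 Z Xt : Z^T = Z -> Aop A Xt = b ->
  fnorm2 (T Z - Z) = fnorm2 (Pproj A (projPSD Z - Xt))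
     + sigma ^+ 2 * fnorm2 (Pperp A (sigma^-1 *: projPSD (- Z) - C)).
Proof.
move=> sZ AXt.
have hx0 : Pproj A Xt = x0 by rewrite /Pproj AXt.
have [_ _ EZ _] := moreau sZ.
have key : T Z - Z = Pproj A (Xt - projPSD Z)
    + sigma *: Pperp A (sigma^-1 *: projPSD (- Z) - C).
  rewrite step_eq //.
  move: EZ; move: (projPSD Z) (projPSD (- Z)) => X S EZ.
  rewrite {1}EZ /Pperp !PprojB PprojZ hx0 !scalerBr !scalerA mulfV ?gt_eqF // !scale1r.
  clear EZ; move: (Pproj A X) (Pproj A S) (Pproj A C) x0 => a1 a2 a3 a5.
  apply/matrixP => i j; rewrite !mxE; lra.
have PZ Y : sigma *: Pperp A Y = Pperp A (sigma *: Y) by rewrite /Pperp PprojZ scalerBr.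
rewrite key PZ (pyth3 Asurj) -PZ fnorm2Z; congr (_ + _).
by rewrite -opprB PprojN fnorm2N.
Qed.

Lemma firm Z1 Z2 : Z1^T = Z1 -> Z2^T = Z2 ->
  fnorm2 (T Z1 - T Z2) + fnorm2 ((Z1 - T Z1) - (Z2 - T Z2)) <= fnorm2 (Z1 - Z2).
Proof.
move=> s1 s2; have [p1 q1 E1 o1] := moreau s1; have [p2 q2 E2 o2] := moreau s2.
rewrite !step_eq //.
move: p1 q1 E1 o1 p2 q2 E2 o2.
move: (projPSD Z1) (projPSD (- Z1)) (projPSD Z2) (projPSD (- Z2)) => X1 S1 X2 S2.
move=> p1 q1 -> o1 p2 q2 -> o2.
have e1 : Pperp A X1 - Pproj A S1 + c0 - (Pperp A X2 - Pproj A S2 + c0)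
    = Pperp A (X1 - X2) - Pproj A (S1 - S2).
  rewrite /Pperp !PprojB; apply/matrixP => i j; rewrite !mxE; lra.
have e2 : X1 - S1 - (Pperp A X1 - Pproj A S1 + c0) - (X2 - S2 - (Pperp A X2 - Pproj A S2 + c0))
    = Pproj A (X1 - X2) - Pperp A (S1 - S2).
  rewrite /Pperp !PprojB; apply/matrixP => i j; rewrite !mxE; lra.
have e3 : X1 - S1 - (X2 - S2) = (X1 - X2) - (S1 - S2).
  apply/matrixP => i j; rewrite !mxE; lra.
rewrite e1 e2 e3 (pyth2 Asurj) (pyth1 Asurj) (fnorm2B (X1 - X2)) (pyth Asurj (X1 - X2)) (pyth Asurj (S1 - S2)).
rewrite !fdotBl !fdotBr o1 o2.
have h1 := psd_dot p1 q2; have h2 := psd_dot p2 q1.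
lra.
Qed.

Lemma fixed_exists : KKT_nonempty A b C -> exists Zs, Zstar A b C sigma Zs.
Proof.
move=> [Xs [y [Ss [AX [pX [ES [pS XS]]]]]]].
exists (Xs - sigma *: Ss).
have pS' : psd (sigma *: Ss) by apply: psdZ => //; exact: ltW.
have o : fdot Xs (sigma *: Ss) = 0 by rewrite fdotZr XS mulr0.
have sZ : (Xs - sigma *: Ss)^T = Xs - sigma *: Ss.
  by case: pX => sX _; case: pS' => sS _; rewrite linearB /= sX sS.
split => //.
rewrite step_eq //.
have -> : projPSD (Xs - sigma *: Ss) = Xs by exact: projPSD_eq pX pS' erefl o.
have -> : projPSD (- (Xs - sigma *: Ss)) = sigma *: Ss.
  by apply: projPSD_eq pS' pX _ _; [rewrite opprB | rewrite fdotC].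
have hx : Pproj A Xs = x0 by rewrite /Pproj AX.
rewrite -ES /Pperp !PprojD PprojZ (Pproj_Aadj Asurj) hx.
apply/matrixP => i j; rewrite !mxE; lra.
Qed.

End Main.

Local Open Scope classical_set_scope.

Lemma sq_le (R : realType) (x y : R) : 0 <= x -> x <= y -> x ^+ 2 <= y ^+ 2.
Proof. move=> h1 h2; rewrite !expr2; nra. Qed.

Theorem lemma4 (R : realType) (n m : nat) (A : 'I_m -> 'M[R]_n)
  (b : 'cV[R]_m) (C : 'M[R]_n) (sigma : R) (Z0 : 'M[R]_n) :
  (forall i, symmx (A i)) -> symmx C ->
  A_surjective A -> KKT_nonempty A b C ->
  0 < sigma -> symmx Z0 ->
  forall k : nat,
    (forall Xt : 'M[R]_n, symmx Xt -> Aop A Xt = b ->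
       fnorm2 (Zseq A b C sigma Z0 k.+1 - Zseq A b C sigma Z0 k)
       = fnorm2 (Pproj A (Xseq A b C sigma Z0 k - Xt))
         + sigma ^+ 2 * fnorm2 (Pperp A (Sseq A b C sigma Z0 k - C)))
    /\
    fnorm2 (Zseq A b C sigma Z0 k.+1 - Zseq A b C sigma Z0 k)
    <= dist (Zseq A b C sigma Z0 k) (Zstar A b C sigma) ^+ 2
       - dist (Zseq A b C sigma Z0 k.+1) (Zstar A b C sigma) ^+ 2.
Proof.
move=> Asym Csym Asurj KKT sig0 s0 k.
have sZ := Zseq_sym b sigma Asym Csym k s0.
rewrite /Xseq /Sseq.
change (Zseq A b C sigma Z0 k.+1) with (admm_step A b C sigma (Zseq A b C sigma Z0 k)).
move: sZ; set Z := Zseq A b C sigma Z0 k => sZ.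
split.
  by move=> Xt _ AXt; rewrite (part1 C Asurj sig0 sZ AXt).
set T := admm_step A b C sigma.
set ZS := Zstar A b C sigma.
have [Zs HZs] := fixed_exists Asurj sig0 KKT.
have lb0 Y : lbound [set fnorm (Y - W) | W in ZS] 0.
  by move=> x [W _ <-]; rewrite /fnorm sqrtr_ge0.
have ne Y : [set fnorm (Y - W) | W in ZS] !=set0.
  by exists (fnorm (Y - Zs)), Zs.
have d1_ge0 : 0 <= dist (T Z) ZS by apply: lb_le_inf; [exact: ne | exact: lb0].
set d1 := dist (T Z) ZS in d1_ge0 *.
set a2 := fnorm2 (T Z - Z) + d1 ^+ 2.
have a2_ge0 : 0 <= a2 by rewrite /a2 addr_ge0 ?fnorm2_ge0 ?sqr_ge0.
have key : lbound [set fnorm (Z - W) | W in ZS] (Num.sqrt a2).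
  move=> x [W [sW fW] <-].
  have hd : d1 <= fnorm (T Z - W).
    by apply: (ge_inf (ex_intro _ 0 (lb0 (T Z)))); exists W.
  have hd2 : d1 ^+ 2 <= fnorm2 (T Z - W).
    by rewrite -(@sqr_sqrtr _ (fnorm2 _)) ?fnorm2_ge0 //; apply: sq_le.
  have hf := firm b C sigma Asurj sZ sW.
  rewrite fW -/T subrr subr0 in hf.
  have sw : fnorm2 (Z - T Z) = fnorm2 (T Z - Z) by rewrite -opprB fnorm2N.
  rewrite sw in hf.
  rewrite /fnorm ler_sqrt ?fnorm2_ge0 // /a2; lra.
have hdist : Num.sqrt a2 <= dist Z ZS by apply: lb_le_inf; [exact: ne | exact: key].
have := @sq_le R _ _ (sqrtr_ge0 a2) hdist. rewrite sqr_sqrtr // /a2. lra.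
Qed.
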